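(* Fix integers $r\ge 1$ and $\Delta\ge 1$. For $m\ge 1$ put $n=m(r+1)$ and $k_0=mr$. There is a field size $q=O(n^{\Delta-1})$ (the implied constant depending only on $r$ and $\Delta$) such that for every $\Delta\times k_0$ matrix $H_{\mathrm{MDS}}$ over $\mathbb{F}_q$ that is a parity-check matrix of a $[k_0,k_0-\Delta]$ MDS code, there exist $x_{ij}\in\mathbb{F}_q$ ($1\le i\le m$, $1\le j\le r$) such that the code with parity-check matrix $$H=\begin{bmatrix} I_m & F\\ 0 & H_{\mathrm{MDS}}\end{bmatrix},$$ where $F$ is the $m\times k_0$ block-diagonal matrix whose $i$-th row has the block $\underline{x}_i^t=(x_{i1},x_{i2},\dots,x_{ir})$ in column positions $(i-1)r+1,\dots,ir$ and zeros elsewhere, is maximally recoverable.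
   Context: The code with parity-check matrix $H$ has length $n$, local groups $\{i\}\cup\{m+(i-1)r+1,\dots,m+ir\}$ for $i=1,\dots,m$ (one local parity per group) and $\Delta$ global parities. It is called maximally recoverable if it corrects every erasure pattern that is correctable by some code with this locality structure; equivalently, for every set $E$ of coordinates consisting of exactly one coordinate from each local group, puncturing the code on $E$ gives an MDS code of length $mr$ and dimension $mr-\Delta$. *)

(* Defs.v *)
From HB Require Import structures.
From mathcomp Require Import all_boot all_order all_algebra all_field.
Set Implicit Arguments. Unset Strict Implicit. Unset Printing Implicit Defensive.
Import GRing.Theory.
Local Open Scope ring_scope.

Section Codes.
Variable F : fieldType.

Definition wt (N : nat) (c : 'rV[F]_N) : nat := #|[set i | c 0 i != 0]|.

(* The linear code spanned by the rows of C (a row space, %MS) is an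
   [N, K] MDS code: dimension K and minimum distance (at least, hence by
   Singleton exactly) N - K + 1. *)
Definition MDS_code (p N : nat) (C : 'M[F]_(p, N)) (K : nat) : Prop :=
  \rank C = K /\
  forall c : 'rV[F]_N, (c <= C)%MS -> c != 0 -> (N - K + 1 <= wt c)%N.

(* The code with parity-check matrix H : its row space is
   { c | H *m c^T = 0 } = { c | c *m H^T = 0 }. *)
Definition code (a N : nat) (H : 'M[F]_(a, N)) : 'M[F]_N := kermx H^T.

Definition puncture (p N : nat) (C : 'M[F]_(p, N)) (E : {set 'I_N})
  : 'M[F]_(p, #|~: E|) :=
  C *m \matrix_(i < N, j < #|~: E|) ((i == enum_val j)%:R).

(* Local groups (0-indexed): group i = {i} U {m + i r, ..., m + i r + r - 1}. *)
Definition local_group (m r : nat) (i : 'I_m) : {set 'I_(m + m * r)} :=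
  [set j : 'I_(m + m * r) | (val j == val i) ||
                            ((m + i * r <= j) && (j < m + i * r + r))%N].

Definition max_recoverable (m r Delta : nat)
    (H : 'M[F]_(m + Delta, m + m * r)) : Prop :=
  forall E : {set 'I_(m + m * r)},
    (forall i : 'I_m, #|E :&: local_group r i| = 1%N) ->
    MDS_code (puncture (code H) E) (m * r - Delta).

(* The block-diagonal m x (m r) matrix F whose i-th row carries
   (x_i1, ..., x_ir) in columns i r, ..., i r + r - 1 (0-indexed). *)
Definition locF (m r : nat) (x : 'M[F]_(m, r)) : 'M[F]_(m, m * r) :=
  \matrix_(i < m, j < m * r)
     \sum_(l < r) (if val j == (i * r + l)%N then x i l else 0).

Definition pcm (m r Delta : nat) (x : 'M[F]_(m, r))
    (HMDS : 'M[F]_(Delta, m * r)) : 'M[F]_(m + Delta, m + m * r) :=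
  block_mx 1%:M (locF x) 0 HMDS.

End Codes.

(* Main.v *)
Require Import Defs.
From HB Require Import structures.
From mathcomp Require Import all_boot all_order all_algebra all_field.
From mathcomp Require Import zify ring lra.
Set Implicit Arguments. Unset Strict Implicit. Unset Printing Implicit Defensive.
Import GRing.Theory.
Local Open Scope ring_scope.

Section Main.
Variable F : finFieldType.
Variables m r' d : nat.
Local Notation r := r'.+1.
Local Notation N := (m + m * r)%N.
Variable HMDS : 'M[F]_(d.+1, m * r).

Lemma idx_proof (i : 'I_m) (l : 'I_r) : (i * r + l < m * r)%N.
Proof. have := ltn_ord i; have := ltn_ord l; nia. Qed.
Definition idx (i : 'I_m) (l : 'I_r) : 'I_(m * r) := Ordinal (idx_proof i l).
Lemma div_proof (j : 'I_(m * r)) : (j %/ r < m)%N.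
Proof. by rewrite ltn_divLR. Qed.
Definition jg (j : 'I_(m * r)) : 'I_m := Ordinal (div_proof j).
Definition jl (j : 'I_(m * r)) : 'I_r := Ordinal (ltn_pmod j (ltn0Sn r')).
Lemma idxK j : idx (jg j) (jl j) = j.
Proof. by apply: val_inj => /=; rewrite -divn_eq. Qed.
Lemma jgK i l : jg (idx i l) = i.
Proof. by apply: val_inj => /=; rewrite divnMDl // divn_small ?addn0. Qed.
Lemma jlK i l : jl (idx i l) = l.
Proof. by apply: val_inj => /=; rewrite modnMDl modn_small. Qed.
Lemma idx_inj i l i' l' : idx i l = idx i' l' -> i = i' /\ l = l'.
Proof. by move=> h; split; [rewrite -(jgK i l) h jgK | rewrite -(jlK i l) h jlK]. Qed.

Definition aco (i : 'I_m) : 'I_N := lshift (m * r) i.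
Definition bco (i : 'I_m) (l : 'I_r) : 'I_N := rshift m (idx i l).

Definition grp (p : 'I_N) : 'I_m :=
  match split p with inl a => a | inr j => jg j end.
Definition loc (p : 'I_N) : 'I_r.+1 :=
  match split p with inl _ => ord0 | inr j => lift ord0 (jl j) end.

Lemma coordP (p : 'I_N) : (exists i, p = aco i) \/ (exists i l, p = bco i l).
Proof.
rewrite -(splitK p); case: (split p) => [a|j] /=; first by left; exists a.
by right; exists (jg j), (jl j); rewrite /bco idxK.
Qed.

Lemma grp_aco i : grp (aco i) = i.
Proof. by rewrite /grp /aco -[lshift _ _]/(unsplit (inl _)) unsplitK. Qed.
Lemma grp_bco i l : grp (bco i l) = i.
Proof. by rewrite /grp /bco -[rshift _ _]/(unsplit (inr _)) unsplitK jgK. Qed.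
Lemma loc_aco i : loc (aco i) = ord0.
Proof. by rewrite /loc /aco -[lshift _ _]/(unsplit (inl _)) unsplitK. Qed.
Lemma loc_bco i l : loc (bco i l) = lift ord0 l.
Proof. by rewrite /loc /bco -[rshift _ _]/(unsplit (inr _)) unsplitK jlK. Qed.

Lemma aco_bco i i' l : aco i != bco i' l.
Proof. by apply/negP => /eqP /(congr1 loc); rewrite loc_aco loc_bco. Qed.
Lemma aco_inj : injective aco.
Proof. by move=> i j /(congr1 grp); rewrite !grp_aco. Qed.
Lemma bco_inj i l i' l' : bco i l = bco i' l' -> i = i' /\ l = l'.
Proof. by move=> /rshift_inj /idx_inj. Qed.

Lemma coord_inj p q : grp p = grp q -> loc p = loc q -> p = q.
Proof.
case: (coordP p) => [[i ->]|[i [l ->]]]; case: (coordP q) => [[i' ->]|[i' [l' ->]]];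
rewrite ?grp_aco ?grp_bco ?loc_aco ?loc_bco.
- by move=> ->.
- by move=> _ /eqP; rewrite (negbTE (neq_lift _ _)).
- by move=> _ /eqP; rewrite eq_sym (negbTE (neq_lift _ _)).
- by move=> -> /lift_inj ->.
Qed.

Lemma in_lg p (i : 'I_m) : (p \in local_group r i) = (grp p == i).
Proof.
rewrite inE; case: (coordP p) => [[i' ->]|[i' [l ->]]].
  rewrite grp_aco /=; apply/idP/eqP.
    move=> /orP [/eqP h|/andP [h1 h2]]; first exact: val_inj.
    by exfalso; have := ltn_ord i'; lia.
  by move=> ->; rewrite eqxx.
rewrite grp_bco /=; apply/idP/eqP.
  move=> /orP [/eqP h|/andP [h1 h2]]; first by exfalso; have := ltn_ord i; lia.
  apply: val_inj => /=; have := ltn_ord l.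
  case: (ltngtP i' i) => // h; first by nia.
  by nia.
by move=> ->; have := ltn_ord l => hl; apply/orP; right; apply/andP; split; lia.
Qed.

Definition cw (x : 'M[F]_(m, r)) (b : 'rV[F]_(m * r)) : 'rV[F]_N :=
  b *m row_mx (- (locF x)^T) 1%:M.

Lemma cw_aco x b i : cw x b 0 (aco i) = - \sum_(l < r) x i l * b 0 (idx i l).
Proof.
rewrite /cw mul_mx_row /aco row_mxEl mulmxN mxE; congr (- _).
rewrite mxE; under eq_bigr => j _ do rewrite mxE [locF _ _ _]mxE mulr_sumr.
rewrite exchange_big /=.
apply: eq_bigr => l _.
rewrite (bigD1 (idx i l)) //= eqxx big1 ?addr0 1?mulrC // => j hj.
case: eqP => [h|_]; last by rewrite mulr0.
by move: hj; rewrite -(inj_eq val_inj) /= h eqxx.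
Qed.

Lemma cw_rs x b j : cw x b 0 (rshift m j) = b 0 j.
Proof. by rewrite /cw mul_mx_row row_mxEr mulmx1. Qed.

Lemma cw_bco x b i l : cw x b 0 (bco i l) = b 0 (idx i l).
Proof. exact: cw_rs. Qed.

Lemma cwD (x : 'M[F]_(m, r)) (a : F) (b : 'rV[F]_(m * r)) (c : F) (e : 'rV[F]_(m * r)) : cw x (a *: b + c *: e) = a *: cw x b + c *: cw x e.
Proof. by rewrite /cw mulmxDl -!scalemxAl. Qed.

Lemma cw_agree (x x' : 'M[F]_(m, r)) (k : 'I_m) b p :
  (forall i l, i != k -> x i l = x' i l) -> p != aco k -> cw x b 0 p = cw x' b 0 p.
Proof.
move=> hx; case: (coordP p) => [[i ->]|[i [l ->]]]; last by rewrite !cw_bco.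
move=> hik; rewrite !cw_aco; congr (- _); apply: eq_bigr => l _; congr (_ * _).
by apply: hx; apply: contra hik => /eqP ->.
Qed.

Definition xt (x : 'M[F]_(m, r)) (k : 'I_m) (t : F) : 'M[F]_(m, r) :=
  \matrix_(i < m, l < r) if i == k then t ^+ l else x i l.

Lemma xt_agree (x : 'M[F]_(m, r)) (k : 'I_m) (t : F) (i : 'I_m) (l : 'I_r) : i != k -> x i l = xt x k t i l.
Proof. by move=> h; rewrite mxE (negbTE h). Qed.

Definition supp (c : 'rV[F]_N) : {set 'I_N} := [set p | c 0 p != 0].
Definition validE (E : {set 'I_N}) := forall i : 'I_m, #|E :&: local_group r i| = 1%N.
Definition C0 (b : 'rV[F]_(m * r)) : bool := (b <= code HMDS)%MS.
Definition Inv (x : 'M[F]_(m, r)) (k : nat) :=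
  forall E, validE E -> (forall i : 'I_m, (k <= i)%N -> aco i \in E) ->
  forall b, C0 b -> b != 0 -> (d.+1 < #|supp (cw x b) :\: E|)%N.
Definition NZ (x : 'M[F]_(m, r)) (k : nat) :=
  forall (i : 'I_m) l, (i < k)%N -> x i l != 0.

Definition inW (x : 'M[F]_(m, r)) (k : 'I_m) (S : {set 'I_N}) (b : 'rV[F]_(m * r)) : bool :=
  C0 b && [forall q, (q != aco k) ==> (cw x b 0 q != 0) ==> (q \in S)].
Definition goodW (x : 'M[F]_(m, r)) (k : 'I_m) (S : {set 'I_N}) (j0 : 'I_r) : bool :=
  [forall b, (inW x k S b && (b != 0)) ==> (b 0 (idx k j0) != 0)].
Definition pb (k : 'I_m) (b : 'rV[F]_(m * r)) : {poly F} :=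
  \poly_(l < r) b 0 (idx k (inord l)).

Lemma pb_eval (k : 'I_m) (b : 'rV[F]_(m * r)) (t : F) : (pb k b).[t] = \sum_(l < r) b 0 (idx k l) * t ^+ l.
Proof. by rewrite horner_poly; apply: eq_bigr => l _; rewrite inord_val. Qed.
Lemma pb_coef (k : 'I_m) (b : 'rV[F]_(m * r)) (j0 : 'I_r) : (pb k b)`_j0 = b 0 (idx k j0).
Proof. by rewrite coef_poly ltn_ord inord_val. Qed.

Lemma linE n (a c : F) (u v : 'rV[F]_n) q : (a *: u + c *: v) 0 q = a * u 0 q + c * v 0 q.
Proof. by rewrite !mxE. Qed.

Lemma inW_lin (x : 'M[F]_(m, r)) (k : 'I_m) (S : {set 'I_N}) (a : F) (b : 'rV[F]_(m * r)) (c : F) (e : 'rV[F]_(m * r)) :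
  inW x k S b -> inW x k S e -> inW x k S (a *: b + c *: e).
Proof.
move=> /andP [hb /forallP hb'] /andP [he /forallP he']; apply/andP; split.
  by rewrite /C0 addmx_sub // scalemx_sub.
apply/forallP => q; apply/implyP => hq; apply/implyP; rewrite cwD linE.
apply: contraR => hS.
have /implyP /(_ hq) /implyP h1 := hb' q; have /implyP /(_ hq) /implyP h2 := he' q.
have -> : cw x b 0 q = 0 by apply/eqP; exact: (contraNT h1 hS).
have -> : cw x e 0 q = 0 by apply/eqP; exact: (contraNT h2 hS).
by rewrite !mulr0 addr0.
Qed.

Definition pat := ({ffun 'I_d -> option 'I_m} * {set option 'I_d * 'I_r.+1})%type.
Definition slotg (k : 'I_m) (f : {ffun 'I_d -> option 'I_m}) (s : option 'I_d) : 'I_m :=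
  match s with None => k | Some s => odflt k (f s) end.
Definition Sp k (p : pat) : {set 'I_N} :=
  [set q | [exists s, ((s, loc q) \in p.2) && (slotg k p.1 s == grp q)]].
Definition Rset (x : 'M[F]_(m, r)) (k : 'I_m) (p : pat) : {set F} :=
  [set t | [exists j0, goodW x k (Sp k p) j0] &&
           [exists b, [&& inW x k (Sp k p) b, b != 0 & (pb k b).[t] == 0]]].

Lemma Rset_card (x : 'M[F]_(m, r)) (k : 'I_m) (p : pat) : (#|Rset x k p| <= r')%N.
Proof.
case: (set_0Vmem (Rset x k p)) => [->|[t0 ht0]]; first by rewrite cards0.
move: ht0; rewrite inE => /andP [/existsP [j0 /forallP hg] /existsP [b0 /and3P [hb0 hb00 _]]].
have key : forall b, inW x k (Sp k p) b -> b != 0 -> b 0 (idx k j0) != 0.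
  by move=> b h1 h2; have := hg b; rewrite h1 h2.
have hP : pb k b0 != 0.
  apply/eqP => h; have := pb_coef k b0 j0; rewrite h coef0 => /esym/eqP.
  by apply/negP; apply: key.
have sub : Rset x k p \subset [set t | root (pb k b0) t].
  apply/subsetP => t; rewrite !inE => /andP [_ /existsP [b1 /and3P [hb1 hb10 /eqP hr]]].
  set a1 := b1 0 (idx k j0); set a0 := b0 0 (idx k j0).
  have hz : a1 *: b0 + (- a0) *: b1 = 0.
    apply/eqP; apply: contraT => hne; have := key _ (inW_lin a1 (- a0) hb0 hb1) hne.
    by rewrite linE mulNr mulrC subrr eqxx.
  have ha1 : a1 != 0 by apply: key.
  have he : forall l, a1 * b0 0 (idx k l) = a0 * b1 0 (idx k l).
    move=> l; have := congr1 (fun M : 'rV[F]_(m * r) => M 0 (idx k l)) hz.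
    by rewrite /= linE mxE mulNr => /eqP; rewrite addr_eq0 opprK => /eqP.
  apply/rootP; apply/eqP; rewrite -(mulrI_eq0 _ (lregP ha1)) pb_eval mulr_sumr.
  under eq_bigr => l _ do rewrite mulrA he -mulrA.
  by rewrite -mulr_sumr -pb_eval hr mulr0.
have := max_poly_roots hP (rs := enum [set t | root (pb k b0) t]).
rewrite enum_uniq -cardE => /(_ _ isT) h.
have hall : all (root (pb k b0)) (enum [set t | root (pb k b0) t]).
  by apply/allP => t; rewrite mem_enum inE.
have := h hall; have := size_poly r (fun l => b0 0 (idx k (inord l))).
rewrite -/(pb k b0) => h1 h2.
by apply: leq_trans (subset_leq_card sub) _; rewrite -ltnS; apply: leq_trans h2 h1.
Qed.

Lemma valid_pick E (i : 'I_m) : validE E -> exists e, E :&: local_group r i = [set e].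
Proof. by move=> hE; apply/cards1P; rewrite hE. Qed.

Lemma E1 E (i : 'I_m) e : E :&: local_group r i = [set e] ->
  (grp e = i) /\ (e \in E) /\ forall q, q \in E -> grp q = i -> q = e.
Proof.
move=> he; have : e \in E :&: local_group r i by rewrite he set11.
rewrite in_setI in_lg => /andP [heE /eqP hg]; split => //; split => // q hq hqg.
by apply/set1P; rewrite -he in_setI hq in_lg hqg eqxx.
Qed.

Lemma validE' E (k : 'I_m) j0 : validE E -> bco k j0 \in E ->
  validE ((E :\ bco k j0) :|: [set aco k]).
Proof.
move=> hE hb i; case: (eqVneq i k) => [->|ne].
  have [e he] := valid_pick k hE; have [_ [_ hu]] := E1 he.
  have hbe := hu _ hb (grp_bco k j0).
  apply/eqP/cards1P; exists (aco k); apply/setP => q; rewrite in_setI in_lg in_setU in_setD1 !in_set1.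
  case: (eqVneq q (aco k)) => [->|nq]; first by rewrite grp_aco eqxx orbT.
  rewrite orbF /=; apply/negbTE; rewrite -andbA negb_and negbK.
  case: (boolP (q \in E)) => hq; last by rewrite orbT.
  case: (eqVneq (grp q) k) => hg; last by rewrite orbT.
  by rewrite (hu _ hq hg) hbe eqxx.
rewrite -(hE i); apply: eq_card => q; rewrite !in_setI !in_lg in_setU in_setD1 !in_set1.
case: (eqVneq (grp q) i) => hg; rewrite ?andbF //.
have h1 : q != bco k j0 by apply: contra_neq ne => h; rewrite -hg h grp_bco.
have h2 : q != aco k by apply: contra_neq ne => h; rewrite -hg h grp_aco.
by rewrite h1 (negbTE h2) orbF.
Qed.

Lemma group_zero (y : 'M[F]_(m, r)) (b : 'rV[F]_(m * r)) (i : 'I_m) (e : 'I_N) :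
  grp e = i -> (e = aco i \/ forall l, y i l != 0) ->
  (forall q, grp q = i -> q != e -> cw y b 0 q = 0) -> cw y b 0 e = 0.
Proof.
move=> hg hy hz.
have hb : forall l, bco i l != e -> b 0 (idx i l) = 0.
  by move=> l hl; rewrite -(cw_bco y); apply: hz => //; rewrite grp_bco.
case: (coordP e) => [[i' he]|[i' [l0 he]]].
  move: hg; rewrite he grp_aco => hi; subst i'.
  rewrite cw_aco big1 ?oppr0 // => l _.
  by rewrite hb ?mulr0 // he eq_sym aco_bco.
move: hg; rewrite he grp_bco => hi; subst i'.
case: hy => [h|hy]; first by move: (aco_bco i i l0); rewrite -h -he eqxx.
have ha : cw y b 0 (aco i) = 0 by apply: hz; rewrite ?grp_aco // he aco_bco.
move: ha; rewrite cw_aco (bigD1 l0) //= big1 ?addr0.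
  by move/eqP; rewrite oppr_eq0 mulf_eq0 (negbTE (hy l0)) /= cw_bco => /eqP.
move=> l hl; rewrite hb ?mulr0 //; rewrite he; apply/negP => /eqP /bco_inj [_ h].
by rewrite h eqxx in hl.
Qed.

Lemma core (x : 'M[F]_(m, r)) (k : 'I_m) (t : F) (E : {set 'I_N}) (b : 'rV[F]_(m * r)) :
  NZ x k -> Inv x k -> t != 0 -> validE E ->
  (forall i : 'I_m, (k < i)%N -> aco i \in E) ->
  C0 b -> b != 0 -> (#|supp (cw (xt x k t) b) :\: E| <= d.+1)%N ->
  exists p, t \in Rset x k p.
Proof.
move=> hNZ hInv ht hE hEk hb hb0 hle.
set y := xt x k t; set S := supp (cw y b).
move: hle; rewrite -/y -/S => hle.
have agree : forall b' q, q != aco k -> cw x b' 0 q = cw y b' 0 q.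
  by move=> b' q hq; apply: cw_agree hq => i l; apply: xt_agree.
have eqo : forall b' (E0 : {set 'I_N}), aco k \in E0 -> supp (cw x b') :\: E0 = supp (cw y b') :\: E0.
  move=> b' E0 hE0; apply/setP => q; rewrite !inE.
  case: (eqVneq q (aco k)) => [->|hq]; first by rewrite hE0.
  by rewrite agree.
have hakE : aco k \notin E.
  apply/negP => hin.
  have hk : forall i : 'I_m, (k <= i)%N -> aco i \in E.
    by move=> i; rewrite leq_eqVlt => /orP [/eqP /val_inj <-|]; [|apply: hEk].
  have := hInv E hE hk b hb hb0; rewrite eqo // -/S.
  by rewrite ltnNge hle.
have [e he] := valid_pick k hE; have [hge [heE heu]] := E1 he.
have [j0 hej] : exists j0, e = bco k j0.
  case: (coordP e) => [[i hi]|[i [l hi]]].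
    by move: hge; rewrite hi grp_aco => hik; move: heE; rewrite hi hik (negbTE hakE).
  by move: hge; rewrite hi grp_bco => <-; exists l.
subst e.
set E' := (E :\ bco k j0) :|: [set aco k].
have hE' : validE E' by apply: validE'.
have hakE' : aco k \in E' by rewrite !inE eqxx orbT.
have hE'k : forall i : 'I_m, (k <= i)%N -> aco i \in E'.
  move=> i; rewrite leq_eqVlt => /orP [/eqP /val_inj <-//|hi].
  by rewrite !inE hEk // (negbTE (aco_bco _ _ _)).
have hInv' := hInv E' hE' hE'k.
have hsub : S :\: E' \subset ((S :\: E) :\ aco k) :|: (S :&: [set bco k j0]).
  apply/subsetP => q; rewrite !inE => /andP [hq1 hq2].
  move: hq1; rewrite negb_or negb_and negbK => /andP [/orP [hqb|hqE] hqa].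
    by rewrite hqb hq2 orbT.
  by rewrite hqa hqE hq2.
have hcnt := leq_trans (subset_leq_card hsub) (leq_card_setU _ _).
have := hInv' b hb hb0; rewrite eqo // -/S => hlt.
have hSE : #|S :\: E| = ((aco k \in S :\: E) + #|(S :\: E) :\ aco k|)%N := cardsD1 _ _.
have hakS : aco k \notin S.
  apply/negP => hin.
  have h1 : (aco k \in S :\: E) = true by rewrite inE hin hakE.
  rewrite h1 in hSE.
  have hB : (#|S :&: [set bco k j0]| <= 1)%N by rewrite -(cards1 (bco k j0)) subset_leq_card // subsetIr.
  by clear -hB hcnt hlt hle hSE; lia.
have hbS : bco k j0 \in S.
  apply: contraT => hin.
  have : S :&: [set bco k j0] = set0.
    apply/setP => q; rewrite in_setI in_set1 in_set0; apply/negbTE/negP => /andP [hqS /eqP hq].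
    by rewrite -hq hqS in hin.
  move=> h0; move: hcnt; rewrite h0 cards0 addn0 => hcnt.
  have hA := subset_leq_card (subD1set (S :\: E) (aco k)).
  suff : False by [].
  by have := leq_trans hlt (leq_trans hcnt (leq_trans hA hle)); rewrite ltnn.
have hroot : (pb k b).[t] == 0.
  move: hakS; rewrite inE negbK cw_aco oppr_eq0 pb_eval.
  rewrite (eq_bigr (fun l => b 0 (idx k l) * t ^+ l)) // => l _.
  by rewrite mxE eqxx mulrC.
have hgood : forall b', inW x k S b' -> b' != 0 -> b' 0 (idx k j0) != 0.
  move=> b' /andP [hb' /forallP hW] hb'0; apply/negP => /eqP hz.
  have := hInv' b' hb' hb'0.
  have : supp (cw x b') :\: E' \subset S :\: E.
    apply/subsetP => q; rewrite !in_setD in_setU in_setD1 in_set1 negb_or negb_and negbK.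
    move=> /andP [/andP [hq1 hq2] hq3]; rewrite inE in hq3.
    have hq := hW q; rewrite hq2 hq3 /= in hq.
    rewrite hq andbT; case/orP: hq1 => // /eqP hqb.
    by move: hq3; rewrite hqb cw_bco hz eqxx.
  move/subset_leq_card => h1 h2.
  by clear -h1 h2 hle; lia.
set G := [set grp q | q in S].
have hGsub : G \subset [set grp q | q in S :\: E].
  apply/subsetP => i /imsetP [q0 hq0 ->].
  apply: contraT => hno.
  have [e he2] := valid_pick (grp q0) hE; have [hge2 [heE2 heu2]] := E1 he2.
  have hz : cw y b 0 e = 0.
    apply: (group_zero hge2).
      case: (ltngtP k (grp q0)) => hc.
      - by left; symmetry; apply: heu2; rewrite ?grp_aco // hEk.
      - by right => l; rewrite mxE ifN ?hNZ // -(inj_eq val_inj) /= neq_ltn hc.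
      - by right => l; rewrite mxE (_ : grp q0 = k) ?eqxx ?expf_neq0 //; apply: val_inj.
    move=> q hq hqe; apply/eqP; apply: contraT => hqS.
    have hqS' : q \in S by rewrite inE.
    case: (boolP (q \in E)) => hqE; first by rewrite (heu2 _ hqE hq) eqxx in hqe.
    exfalso; move/negP: hno; apply; apply/imsetP; exists q; last by rewrite hq.
    by rewrite in_setD hqE hqS'.
  have hq0e : q0 = e.
    apply: heu2 => //; apply: contraT => hn.
    exfalso; move/negP: hno; apply; apply/imsetP; exists q0 => //.
    by rewrite in_setD hn hq0.
  by move: hq0; rewrite inE hq0e hz eqxx.
have hGcard : (#|G| <= d.+1)%N.
  by apply: leq_trans (subset_leq_card hGsub) _; apply: leq_trans (leq_imset_card _ _) hle.
have hkG : k \in G by apply/imsetP; exists (bco k j0); rewrite ?grp_bco.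
set G' := G :\ k.
have hG' : (#|G'| <= d)%N by move: hGcard; rewrite (cardsD1 k G) hkG.
set f : {ffun 'I_d -> option 'I_m} := [ffun s : 'I_d => nth None [seq Some i | i <- enum G'] s].
set T : {set option 'I_d * 'I_r.+1} :=
  [set sl | [exists q in S, (grp q == slotg k f sl.1) && (loc q == sl.2)]].
have hSp : Sp k (f, T) = S.
  apply/setP => q; rewrite inE; apply/idP/idP.
    move=> /existsP [s /andP [hsT /eqP hs]]; move: hsT; rewrite inE /=.
    move=> /existsP [q' /and3P [hq' /eqP hg /eqP hl]].
    by rewrite -(coord_inj (etrans hg hs) hl).
  move=> hq; apply/existsP.
  case: (eqVneq (grp q) k) => hgk.
    exists None; rewrite /= hgk eqxx andbT inE; apply/existsP; exists q.
    by rewrite hq hgk !eqxx.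
  have hgG' : grp q \in G' by rewrite !inE hgk; apply/imsetP; exists q.
  have hidx : (index (grp q) (enum G') < d)%N.
    by apply: leq_trans hG'; rewrite cardE index_mem mem_enum.
  have hfs : f (Ordinal hidx) = Some (grp q).
    rewrite ffunE /= (nth_map k) ?nth_index ?mem_enum //.
    by rewrite index_mem mem_enum.
  have hsl : slotg k f (Some (Ordinal hidx)) = grp q by rewrite /slotg hfs.
  exists (Some (Ordinal hidx)); rewrite hsl eqxx andbT inE; apply/existsP; exists q.
  by rewrite hq hsl !eqxx.
exists (f, T); rewrite inE hSp; apply/andP; split.
  apply/existsP; exists j0; apply/forallP => b'; apply/implyP => /andP [h1 h2].
  exact: hgood.
apply/existsP; exists b; apply/and3P; split => //.
apply/andP; split => //.
apply/forallP => q; apply/implyP => hq; apply/implyP => hne.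
by rewrite inE -agree.
Qed.

Lemma card_bigcup_le (T I : finType) (A : I -> {set T}) :
  (#|\bigcup_(i : I) A i| <= \sum_(i : I) #|A i|)%N.
Proof.
apply: (big_ind2 (fun (X : {set T}) (n : nat) => #|X| <= n)%N) => //.
  by rewrite cards0.
move=> X n Y n' h1 h2; apply: leq_trans (leq_card_setU _ _) _; exact: leq_add.
Qed.

Lemma step (x : 'M[F]_(m, r)) (k : 'I_m) :
  NZ x k -> Inv x k -> (1 + #|{: pat}| * r' < #|F|)%N ->
  exists x', NZ x' k.+1 /\ Inv x' k.+1.
Proof.
move=> hNZ hInv hF.
set Bad := [set t : F | (t == 0) || [exists p, t \in Rset x k p]].
have hB : (#|Bad| <= 1 + #|{: pat}| * r')%N.
  have sub : Bad \subset [set 0] :|: \bigcup_(p : pat) Rset x k p.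
    apply/subsetP => t; rewrite inE => /orP [/eqP ->|/existsP [p hp]].
      by rewrite in_setU set11.
    by rewrite in_setU; apply/orP; right; apply/bigcupP; exists p.
  apply: leq_trans (subset_leq_card sub) _.
  apply: leq_trans (leq_card_setU _ _) _; rewrite cards1 leq_add2l.
  apply: leq_trans (card_bigcup_le _) _.
  rewrite -sum_nat_const; apply: leq_sum => p _; exact: Rset_card.
have : (0 < #|~: Bad|)%N.
  move: hF; rewrite -(cardsC Bad) => hF.
  by move: hB hF; clear; lia.
move=> /card_gt0P [t]; rewrite in_setC inE negb_or => /andP [ht0 /existsPn hR].
exists (xt x k t); split.
  move=> i l; rewrite ltnS leq_eqVlt => /orP [/eqP hik|hik].
    have -> : i = k by apply: val_inj.
    by rewrite mxE eqxx expf_neq0.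
  by rewrite mxE ifN ?hNZ // -(inj_eq val_inj) /= neq_ltn hik.
move=> E hE hEk b hb hb0; rewrite ltnNge; apply/negP => hle.
have hEk' : forall i : 'I_m, (k < i)%N -> aco i \in E by move=> i hi; apply: hEk.
have [p hp] := core hNZ hInv ht0 hE hEk' hb hb0 hle.
by have := hR p; rewrite hp.
Qed.

Lemma wt_bound (hMDS : MDS_code (code HMDS) (m * r - d.+1)) (b : 'rV[F]_(m * r)) :
  C0 b -> b != 0 -> (d.+1 < wt b)%N.
Proof.
move=> hb hb0; have := hMDS.2 b hb hb0.
have : (wt b <= m * r)%N by rewrite /wt; apply: leq_trans (max_card _) _; rewrite card_ord.
move: (wt b) (m * r) => w M; clear; lia.
Qed.

Lemma Inv0 (hMDS : MDS_code (code HMDS) (m * r - d.+1)) (x : 'M[F]_(m, r)) : Inv x 0.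
Proof.
move=> E hE hEk b hb hb0.
apply: leq_trans (wt_bound hMDS hb hb0) _.
rewrite /wt -(card_imset _ (@rshift_inj m (m * r))).
apply: subset_leq_card; apply/subsetP => q /imsetP [j]; rewrite inE => hj ->.
rewrite in_setD inE cw_rs hj andbT.
have [e he] := valid_pick (jg j) hE; have [hge [heE heu]] := E1 he.
apply/negP => hin.
have hr : rshift m j = bco (jg j) (jl j) by rewrite /bco idxK.
have h1 : rshift m j = e by apply: heu => //; rewrite hr grp_bco.
have h2 : aco (jg j) = e by apply: heu; [apply: hEk | rewrite grp_aco].
by move: (aco_bco (jg j) (jg j) (jl j)); rewrite h2 -h1 hr eqxx.
Qed.

Lemma code_char (x : 'M[F]_(m, r)) (c : 'rV[F]_N) :
  (c <= code (pcm x HMDS))%MS -> C0 (rsubmx c) /\ c = cw x (rsubmx c).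
Proof.
rewrite /code sub_kermx /pcm tr_block_mx trmx1 trmx0 -{1}(hsubmxK c) mul_row_block.
rewrite row_mx_eq0 mulmx1 mulmx0 add0r => /andP [/eqP h1 /eqP h2].
split; first by rewrite /C0 /code sub_kermx h2.
rewrite /cw mul_mx_row mulmx1 mulmxN -{1}(hsubmxK c); congr row_mx.
by apply/eqP; rewrite -addr_eq0 h1.
Qed.

Definition Pm (E : {set 'I_N}) : 'M[F]_(N, #|~: E|) :=
  \matrix_(i < N, j < #|~: E|) ((i == enum_val j)%:R).

Lemma punct_entry E (c : 'rV[F]_N) j : (c *m Pm E) 0 j = c 0 (enum_val j).
Proof.
rewrite mxE (bigD1 (enum_val j)) //= mxE eqxx mulr1 big1 ?addr0 // => i hi.
by rewrite mxE (negbTE hi) mulr0.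
Qed.

Lemma punct_wt E (c : 'rV[F]_N) : wt (c *m Pm E) = #|supp c :\: E|.
Proof.
rewrite /wt -(card_imset _ enum_val_inj); apply: eq_card => q.
apply/imsetP/idP.
  move=> [j]; rewrite inE punct_entry => hj ->.
  rewrite in_setD inE hj andbT; have := enum_valP j; by rewrite inE.
rewrite in_setD inE => /andP [hqE hq].
have hq' : q \in ~: E by rewrite inE.
exists (enum_rank_in hq' q); last by rewrite enum_rankK_in.
by rewrite inE punct_entry enum_rankK_in.
Qed.

Lemma cardE_m E : validE E -> #|E| = m.
Proof.
move=> hE; rewrite -(card_in_imset (f := grp)).
  have -> : grp @: E = [set: 'I_m].
    apply/setP => i; rewrite inE; have [e he] := valid_pick i hE.
    by have [hge [heE _]] := E1 he; apply/imsetP; exists e.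
  by rewrite cardsT card_ord.
move=> q1 q2 h1 h2 hg; have [e he] := valid_pick (grp q1) hE; have [_ [_ heu]] := E1 he.
by rewrite (heu _ h1 erefl) (heu _ h2 (esym hg)).
Qed.

Lemma rank_pcm (x : 'M[F]_(m, r)) : \rank (pcm x HMDS) = (m + \rank HMDS)%N.
Proof.
set U : 'M[F]_(m + m * r) := block_mx 1%:M (- locF x) 0 1%:M.
have hU : row_free U by rewrite row_free_unit unitmxE det_ublock !det1 mulr1 unitr1.
rewrite -(mxrankMfree _ hU) /pcm /U mulmx_block !mul1mx !mulmx0 !mul0mx !mulmx1.
by rewrite addr0 add0r addNr add0r rank_diag_block_mx mxrank1.
Qed.

Lemma final (hMDS : MDS_code (code HMDS) (m * r - d.+1)) (x : 'M[F]_(m, r)) :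
  Inv x m -> max_recoverable (pcm x HMDS).
Proof.
move=> hI E hE.
have hcw : forall c, (c <= code (pcm x HMDS))%MS -> c != 0 -> (d.+1 < #|supp c :\: E|)%N.
  move=> c hc hc0; have [h1 h2] := code_char hc; rewrite h2; apply: hI => //.
    by move=> i; rewrite leqNgt ltn_ord.
  by apply: contra hc0 => /eqP h0; rewrite h2 h0 /cw mul0mx.
have -> : puncture (code (pcm x HMDS)) E = code (pcm x HMDS) *m Pm E by [].
split.
  have := mxrank_mul_ker (code (pcm x HMDS)) (Pm E).
  have -> : \rank (code (pcm x HMDS) :&: kermx (Pm E)) = 0%N.
    apply/eqP; rewrite mxrank_eq0 -submx0; apply/row_subP => i; rewrite submx0.
    apply: contraT => hne.
    move: hne; set u := row i _ => hne.
    have hu1 : (u <= code (pcm x HMDS))%MS := submx_trans (row_sub i _) (capmxSl _ _).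
    have hu2 : u *m Pm E = 0.
      by apply/eqP; rewrite -sub_kermx; exact: submx_trans (row_sub i _) (capmxSr _ _).
    have := hcw u hu1 hne; rewrite -punct_wt hu2.
    suff -> : wt (0 : 'rV[F]_#|~: E|) = 0%N by [].
    by rewrite /wt; apply/eqP; rewrite cards_eq0; apply/eqP/setP => j; rewrite !inE mxE eqxx.
  rewrite addn0 => ->.
  have h1 := hMDS.1; move: h1; rewrite /code !mxrank_ker !mxrank_tr rank_pcm subnDl.
  by [].
move=> c' hc' hc'0.
set A := code (pcm x HMDS).
have hc := mulmxKpV hc'.
set c := c' *m pinvmx (A *m Pm E) *m A.
have hcc : c' = c *m Pm E by rewrite /c -mulmxA hc.
have hcA : (c <= A)%MS by apply: submxMl.
have hc0 : c != 0 by apply: contra hc'0 => /eqP h; rewrite hcc h mul0mx.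
rewrite hcc punct_wt.
have := hcw c hcA hc0.
have hC := cardsC E; rewrite cardE_m // card_ord in hC.
move: hC; move: #|~: E| #|supp c :\: E| (m * r) => a w M; clear; lia.
Qed.

Lemma powle (a b e : nat) : (a <= b)%N -> (a ^ e <= b ^ e)%N.
Proof. by move=> h; elim: e => // e IH; rewrite !expnS leq_mul. Qed.

Lemma build (hMDS : MDS_code (code HMDS) (m * r - d.+1))
  (hF : (1 + #|{: pat}| * r' < #|F|)%N) :
  forall k, (k <= m)%N -> exists x, NZ x k /\ Inv x k.
Proof.
elim => [|k IH] hk.
  by exists 0; split; [move=> i l; rewrite ltn0 | exact: Inv0].
have [x [h1 h2]] := IH (ltnW hk).
exact: (step (k := Ordinal hk) h1 h2 hF).
Qed.

Lemma card_pat : #|{: pat}| = (m.+1 ^ d * 2 ^ (d.+1 * r.+1))%N.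
Proof.
rewrite card_prod card_ffun !card_option !card_ord -cardsT -powersetT card_powerset.
by rewrite cardsT card_prod card_option !card_ord.
Qed.

End Main.

Unset Implicit Arguments.

Theorem theorem4 (r Delta : nat) :
  (1 <= r)%N -> (1 <= Delta)%N ->
  exists C : nat,
    forall m : nat, (1 <= m)%N ->
    forall F : finFieldType,
      (C * (m * (r + 1)) ^ (Delta - 1) <= #|F|)%N ->
      forall HMDS : 'M[F]_(Delta, m * r),
        MDS_code (code HMDS) (m * r - Delta) ->
        exists x : 'M[F]_(m, r), max_recoverable (pcm x HMDS).
Proof.
case: r => [|r'] // _; case: Delta => [|d] // _.
exists (2 ^ d * 2 ^ (d.+1 * r'.+2) * r'.+1 + 2)%N => m hm F hF HMDS hMDS.
have hF' : (1 + #|{: pat m r' d}| * r' < #|F|)%N.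
  rewrite card_pat; apply: leq_trans hF; rewrite subSS subn0.
  have h1 : (m.+1 ^ d <= 2 ^ d * (m * (r'.+1 + 1)) ^ d)%N.
    rewrite -expnMn; apply: powle; nia.
  have h2 : (1 <= (m * (r'.+1 + 1)) ^ d)%N by rewrite expn_gt0 muln_gt0 hm addn1.
  move: h1 h2; generalize (m.+1 ^ d)%N ((m * (r'.+1 + 1)) ^ d)%N (2 ^ d)%N (2 ^ (d.+1 * r'.+2))%N.
  intros a P K L h1 h2.
  have h3 : (a * L * r' <= K * P * L * r')%N by apply: leq_mul => //; apply: leq_mul.
  clear -h2 h3; nia.
have [x [_ hx]] := build hMDS hF' (leqnn m).
by exists x; apply: final.
Qed.
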